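(* Let $(X,G)$ be a symmetric $G$-metric space and let $T:X\to X$. Suppose that $X$ is $T$-orbitally complete, that $T$ is orbitally continuous and injective, and that there exist a real number $q<1$ and a non-negative real-valued function $a:X\times X\times X\to[0,\infty)$ such that for all $x,y,z\in X$ with $x\neq y$, \[ G(Tx,Ty,Tz) < q\cdot \max\Big\{ G(x,y,z),\ a(x,y,z)\,G(Tx,y,z)\,G(x,Ty,z)\,G(x,y,Tz),\ [G(x,y,z)\,G(Tx,Ty,Tz)]^{-1}G(x,Tx,Tx)\,G(y,Ty,Ty)\,G(z,Tz,Tz) \Big\}. \] Then for each $x\in X$ the sequence $(T^nx)$ $G$-converges to some $u_x\in X$ and $Tu_x=u_x$. If in addition $a(x,y,z)\leq [G(x,y,z)G(Tx,Ty,Tz)]^{-1}$ (for all $x,y,z\in X$ with $x\ne y$), then $T$ has a unique fixed point.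
   Context: A $G$-metric space is a nonempty set $X$ with a function $G:X\times X\times X\to[0,\infty)$ such that: (G1) $G(x,y,z)=0$ if $x=y=z$; (G2) $G(x,x,y)>0$ whenever $x\neq y$; (G3) $G(x,x,y)\le G(x,y,z)$ whenever $z\neq y$; (G4) $G$ is symmetric in all three variables; (G5) $G(x,y,z)\le G(x,a,a)+G(a,y,z)$ for all $x,y,z,a\in X$. It is symmetric if $G(x,y,y)=G(x,x,y)$ for all $x,y$. A sequence $(x_n)$ $G$-converges to $x$ if $G(x,x_n,x_m)\to 0$ as $n,m\to\infty$ (equivalently $G(x_n,x,x)\to0$); it is $G$-Cauchy if for every $\varepsilon>0$ there is $N$ with $G(x_n,x_m,x_m)<\varepsilon$ for all $n,m\ge N$. For $a\in X$ let $I(a,T)=\{a,Ta,T^2a,\dots\}$. $T$ is orbitally continuous if whenever $T^{n_i}x\to x^*$ ($G$-convergence) for some $x$ and some increasing sequence $(n_i)$, then $TT^{n_i}x\to Tx^*$. $X$ is $T$-orbitally complete if for every $a\in X$, every $G$-Cauchy sequence contained in $I(a,T)$ $G$-converges in $X$. *)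

(* Defs.v *)
From Stdlib Require Import Reals.
Open Scope R_scope.

Definition is_Gmetric {X : Type} (G : X -> X -> X -> R) : Prop :=
  (forall x y z, 0 <= G x y z) /\
  (forall x, G x x x = 0) /\
  (forall x y, x <> y -> 0 < G x x y) /\
  (forall x y z, z <> y -> G x x y <= G x y z) /\
  (forall x y z, G x y z = G x z y /\ G x y z = G y x z /\
                 G x y z = G y z x /\ G x y z = G z x y /\
                 G x y z = G z y x) /\
  (forall x y z a, G x y z <= G x a a + G a y z).

Definition G_symmetric {X : Type} (G : X -> X -> X -> R) : Prop :=
  forall x y, G x y y = G x x y.

Definition Gconv {X : Type} (G : X -> X -> X -> R) (s : nat -> X) (p : X) : Prop :=
  forall eps, 0 < eps -> exists N : nat,
    forall n m, (N <= n)%nat -> (N <= m)%nat -> G p (s n) (s m) < eps.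

Definition GCauchy {X : Type} (G : X -> X -> X -> R) (s : nat -> X) : Prop :=
  forall eps, 0 < eps -> exists N : nat,
    forall n m, (N <= n)%nat -> (N <= m)%nat -> G (s n) (s m) (s m) < eps.

Definition in_orbit {X : Type} (T : X -> X) (a y : X) : Prop :=
  exists k : nat, y = Nat.iter k T a.

Definition orbitally_continuous {X : Type} (G : X -> X -> X -> R) (T : X -> X) : Prop :=
  forall (x xs : X) (ni : nat -> nat),
    (forall i, (ni i < ni (S i))%nat) ->
    Gconv G (fun i => Nat.iter (ni i) T x) xs ->
    Gconv G (fun i => T (Nat.iter (ni i) T x)) (T xs).

Definition orbitally_complete {X : Type} (G : X -> X -> X -> R) (T : X -> X) : Prop :=
  forall (a : X) (s : nat -> X),
    (forall n, in_orbit T a (s n)) -> GCauchy G s -> exists p : X, Gconv G s p.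

(* Main.v *)
Require Import Defs.
From Stdlib Require Import Reals Lra Lia Classical.
Open Scope R_scope.

Theorem theorem1 (X : Type) (G : X -> X -> X -> R) (T : X -> X)
  (hX : inhabited X)
  (hG : is_Gmetric G) (hsym : G_symmetric G)
  (hcomp : orbitally_complete G T) (hcont : orbitally_continuous G T)
  (hinj : forall x y, T x = T y -> x = y)
  (q : R) (hq : q < 1) (a : X -> X -> X -> R)
  (ha : forall x y z, 0 <= a x y z)
  (hcontr : forall x y z, x <> y ->
     G (T x) (T y) (T z) <
       q * Rmax (G x y z)
             (Rmax (a x y z * G (T x) y z * G x (T y) z * G x y (T z))
                   (/ (G x y z * G (T x) (T y) (T z)) *
                    G x (T x) (T x) * G y (T y) (T y) * G z (T z) (T z)))) :
  (forall x, exists u, Gconv G (fun n => Nat.iter n T x) u /\ T u = u) /\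
  ((forall x y z, x <> y -> a x y z <= / (G x y z * G (T x) (T y) (T z))) ->
   exists! u, T u = u).
Proof.
  destruct hG as [Gnn [G1 [G2 [G3 [G4 G5]]]]].
  assert (Gswap : forall a b, G a b b = G b a a).
  { intros a0 b. destruct (G4 a0 b b) as [_ [_ [_ [_ E]]]]. rewrite E. rewrite (hsym b a0). reflexivity. }
  assert (Gpos : forall a b, a <> b -> 0 < G a b b).
  { intros a0 b H. rewrite hsym. apply G2. exact H. }
  assert (Gzero : forall a b, G a b b = 0 -> a = b).
  { intros a0 b H. destruct (classic (a0 = b)) as [e|n]; auto.
    specialize (Gpos _ _ n). lra. }
  assert (Gconv_fix : (forall x, exists u, Gconv G (fun n => Nat.iter n T x) u /\ T u = u) /\ True).
  2: split; [exact (proj1 Gconv_fix)|].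
  split; [|exact I].
  intro x0.
    set (r := Rmax 0 q).
    assert (Hr0 : 0 <= r) by (unfold r; apply Rmax_l).
    assert (Hr1 : r < 1) by (unfold r; apply Rmax_lub_lt; lra).
    set (d := fun n => G (Nat.iter n T x0) (Nat.iter (S n) T x0) (Nat.iter (S n) T x0)).
    assert (Hd : forall n, d (S n) <= r * d n).
    { intro n. unfold d. simpl Nat.iter.
      set (xn := Nat.iter n T x0).
      assert (Hdn : 0 <= G xn (T xn) (T xn)) by apply Gnn.
      destruct (classic (xn = T xn)) as [e|ne].
      + assert (E1 : T xn = xn) by auto. assert (E2 : T (T xn) = xn) by (rewrite E1; exact E1).
        rewrite E2, E1, G1. lra.
      + pose proof (Gpos _ _ ne) as Hp.
        specialize (hcontr xn (T xn) (T xn) ne).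
        rewrite G1 in hcontr.
        set (d0 := G xn (T xn) (T xn)) in *.
        set (d1 := G (T xn) (T (T xn)) (T (T xn))) in *.
        assert (Hd1 : 0 <= d1) by apply Gnn.
        destruct (Req_dec d1 0) as [z|nz].
        { rewrite z. apply Rmult_le_pos; lra. }
        replace (/ (d0 * d1) * d0 * d1 * d1) with d1 in hcontr by (field; lra).
        replace (a xn (T xn) (T xn) * 0 * G xn (T (T xn)) (T xn) * G xn (T xn) (T (T xn))) with 0 in hcontr by ring.
        assert (Hq : 0 < q).
        { destruct (Rle_lt_dec q 0) as [l|l]; auto.
          assert (d0 <= Rmax d0 (Rmax 0 d1)) by apply Rmax_l. nra. }
        unfold r. rewrite Rmax_right by lra.
        unfold Rmax at 2 in hcontr. destruct (Rle_dec 0 d1); [|lra].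
        unfold Rmax in hcontr. destruct (Rle_dec d0 d1); nra. }
    set (C := d 0%nat / (1 - r)).
    assert (Hd0 : 0 <= d 0%nat) by apply Gnn.
    assert (HC : 0 <= C) by (unfold C; apply Rmult_le_pos; [lra| apply Rlt_le, Rinv_0_lt_compat; lra]).
    assert (Hdn : forall n, d n <= r ^ n * d 0%nat).
    { induction n; simpl; [lra|]. specialize (Hd n). nra. }
    assert (Hb : forall k n, G (Nat.iter n T x0) (Nat.iter (n + k) T x0) (Nat.iter (n + k) T x0) <= r ^ n * C).
    { induction k; intro n.
      - rewrite Nat.add_0_r, G1. apply Rmult_le_pos; auto. apply pow_le; lra.
      - eapply Rle_trans. apply (G5 _ _ _ (Nat.iter (S n) T x0)).
        replace (n + S k)%nat with (S n + k)%nat by lia.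
        pose proof (IHk (S n)). pose proof (Hdn n).
        fold (d n).
        assert (E : r ^ n * C = r ^ n * d 0%nat + r ^ S n * C).
        { simpl. unfold C. field. lra. }
        lra. }
    assert (Hcau : GCauchy G (fun n => Nat.iter n T x0)).
    { intros eps He.
      assert (Habs : Rabs r < 1) by (rewrite Rabs_right; lra).
      destruct (pow_lt_1_zero r Habs (eps / (C + 1))) as [N HN].
      { apply Rdiv_lt_0_compat; lra. }
      exists N. intros n m Hn Hm.
      assert (K : forall n, (n >= N)%nat -> r ^ n * C < eps).
      { intros n0 H0. specialize (HN n0 H0). rewrite Rabs_right in HN by (apply Rle_ge, pow_le; lra).
        assert (0 <= r ^ n0) by (apply pow_le; lra).
        apply Rmult_lt_compat_r with (r := C + 1) in HN; [|lra].
        unfold Rdiv in HN. rewrite Rmult_assoc, Rinv_l in HN by lra. nra. }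
      destruct (Nat.le_ge_cases n m) as [l|l].
      - replace m with (n + (m - n))%nat by lia.
        eapply Rle_lt_trans. apply Hb. apply K. lia.
      - rewrite hsym. destruct (G4 (Nat.iter n T x0) (Nat.iter n T x0) (Nat.iter m T x0)) as [_ [_ [_ [_ E]]]].
        rewrite E. replace n with (m + (n - m))%nat by lia.
        eapply Rle_lt_trans. apply Hb. apply K. lia. }
    destruct (hcomp x0 (fun n => Nat.iter n T x0)) as [u Hu].
    { intro n. exists n. reflexivity. }
    { exact Hcau. }
    exists u. split; [exact Hu|].
    pose proof (hcont x0 u (fun i => i) (fun i => Nat.lt_succ_diag_r i) Hu) as HT.
    simpl in HT.
    assert (Hz : G u (T u) (T u) = 0).
    { destruct (Rle_lt_or_eq_dec 0 (G u (T u) (T u)) (Gnn _ _ _)) as [p|p]; [|auto].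
      exfalso. set (g := G u (T u) (T u)) in *.
      destruct (Hu (g/2)) as [N1 H1]; [lra|].
      destruct (HT (g/2)) as [N2 H2]; [lra|].
      specialize (H1 (S (N1 + N2)) (S (N1+N2)) ltac:(lia) ltac:(lia)).
      specialize (H2 (N1 + N2)%nat (N1+N2)%nat ltac:(lia) ltac:(lia)).
      pose proof (G5 u (T u) (T u) (Nat.iter (S (N1 + N2)) T x0)).
      rewrite (Gswap (Nat.iter (S (N1 + N2)) T x0) (T u)) in H. simpl Nat.iter in H, H1. unfold g in *. lra. }
    symmetry. apply Gzero. exact Hz.
  - intro Ha. destruct hX as [x0].
    destruct (proj1 (Gconv_fix) x0) as [u [_ Hu]].
    exists u. split; [exact Hu|].
    intros v Hv. destruct (classic (u = v)) as [e|ne]; [exact e|exfalso].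
    specialize (hcontr u v v ne). specialize (Ha u v v ne).
    rewrite Hu, Hv in hcontr, Ha. rewrite !G1 in hcontr.
    pose proof (Gpos _ _ ne) as Hg. set (g := G u v v) in *.
    assert (Hs : a u v v * g * g * g <= g).
    { assert (a u v v * (g * g) <= / (g * g) * (g * g)) by (apply Rmult_le_compat_r; nra).
      rewrite Rinv_l in H by nra. nra. }
    idtac.
    unfold Rmax in hcontr. repeat match type of hcontr with context [Rle_dec ?x ?y] => destruct (Rle_dec x y) end; nra.
Qed.
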